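(* Let $\vartheta_1$ be the random Fibonacci substitution, let $p\ge 0$ and let $u$ be a finite word over $\{a,b\}$. If either of the sets $\vartheta_1^p(a)\,u\,ab$ or $\vartheta_1^p(a)\,u\,ba$ contains a $\vartheta_1$-legal word, then both sets $\vartheta_1^p(a)\,\vartheta_1(u)\,ab$ and $\vartheta_1^p(a)\,\vartheta_1(u)\,\vartheta_1(b)\,ba$ contain $\vartheta_1$-legal words.
   Context: The random Fibonacci substitution is $\vartheta_1\colon a\mapsto\{ab,ba\},\ b\mapsto\{a\}$, extended to words by set concatenation $\vartheta_1(w_1\cdots w_k)=\vartheta_1(w_1)\cdots\vartheta_1(w_k)$ (with $AB=\{xy\mid x\in A,y\in B\}$, a single word being identified with the singleton set) and to sets of words by unions; $\vartheta_1^p$ is the $p$-fold iterate ($\vartheta_1^0(a)=\{a\}$). A word is $\vartheta_1$-legal if it is a subword of some element of $\vartheta_1^k(x)$ for some $k\ge0$ and letter $x$. *)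

(* Defs.v *)
From HB Require Import structures.
From mathcomp Require Import all_boot.
Set Implicit Arguments. Unset Strict Implicit. Unset Printing Implicit Defensive.

Inductive letter := La | Lb.
Definition letter_to_bool (x : letter) : bool := if x is La then true else false.
Definition bool_to_letter (b : bool) : letter := if b then La else Lb.
Lemma letter_boolK : cancel letter_to_bool bool_to_letter. Proof. by case. Qed.
HB.instance Definition _ := Equality.copy letter (can_type letter_boolK).

Definition word := seq letter.

Definition wset := word -> Prop.

Definition theta_letter (x : letter) : wset :=
  match x with
  | La => fun w => w = [:: La; Lb] \/ w = [:: Lb; La]
  | Lb => fun w => w = [:: La]
  end.

Definition wcat (S T : wset) : wset :=
  fun w => exists x y, S x /\ T y /\ w = x ++ y.

Definition wsingle (u : word) : wset := fun w => w = u.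

Fixpoint theta_word (u : word) : wset :=
  match u with
  | [::] => wsingle [::]
  | x :: u' => wcat (theta_letter x) (theta_word u')
  end.

Definition theta_set (S : wset) : wset :=
  fun w => exists u, S u /\ theta_word u w.

Fixpoint theta_iter (p : nat) (S : wset) : wset :=
  match p with
  | 0 => S
  | p'.+1 => theta_set (theta_iter p' S)
  end.

Definition legal (w : word) : Prop :=
  exists k x v, theta_iter k (wsingle [:: x]) v /\ infix w v.

Definition contains_legal (S : wset) : Prop := exists w, S w /\ legal w.

(* Main.v *)
Require Import Defs.
From mathcomp Require Import all_boot.

Lemma theta_cat {v1 v2 w1 w2} :
  theta_word v1 w1 -> theta_word v2 w2 -> theta_word (v1 ++ v2) (w1 ++ w2).
Proof.
elim: v1 w1 => [|c v1 IH] w1 /=.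
  by move=> -> H.
move=> [x [y [Hx [Hy ->]]]] H2.
exists x, (y ++ w2); split => //; split; first exact: IH.
by rewrite catA.
Qed.

Lemma theta_cat_inv {v1 v2 w} :
  theta_word (v1 ++ v2) w ->
  exists w1 w2, w = w1 ++ w2 /\ theta_word v1 w1 /\ theta_word v2 w2.
Proof.
elim: v1 w => [|c v1 IH] w /=.
  by move=> H; exists [::], w.
move=> [x [y [Hx [Hy ->]]]].
have [w1 [w2 [-> [H1 H2]]]] := IH _ Hy.
exists (x ++ w1), w2; split; first by rewrite catA.
split => //; by exists x, w1.
Qed.

Lemma theta_ex v : exists w, theta_word v w.
Proof.
elim: v => [|c v [w Hw]]; first by exists [::].
case: c.
- exists ([:: La; Lb] ++ w); exists [:: La; Lb], w; by split; [left|].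
- exists ([:: La] ++ w); by exists [:: La], w.
Qed.

Lemma diamond_letter {c : letter} {x y : word} :
  theta_letter c x -> theta_letter c y ->
  exists w, theta_word x w /\ theta_word y w.
Proof.
have Hab : theta_word [:: La; Lb] [:: La; Lb; La].
  exists [:: La; Lb], [:: La]; split; first by left.
  split => //; by exists [:: La], [::].
have Hba : theta_word [:: Lb; La] [:: La; Lb; La].
  exists [:: La], [:: Lb; La]; split => //.
  split => //; exists [:: Lb; La], [::]; split; [by right|by []].
case: c => /=.
- by move=> [->|->] [->|->]; exists [:: La; Lb; La].
- move=> -> ->. exists [:: La; Lb]; split; exists [:: La; Lb], [::]; split; by [left|].
Qed.

Lemma diamond {z x y} :
  theta_word z x -> theta_word z y -> exists w, theta_word x w /\ theta_word y w.
Proof.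
elim: z x y => [|c z IH] x y /=.
  by move=> -> ->; exists [::].
move=> [x1 [x2 [Hx1 [Hx2 ->]]]] [y1 [y2 [Hy1 [Hy2 ->]]]].
have [w1 [H1 H1']] := diamond_letter Hx1 Hy1.
have [w2 [H2 H2']] := IH _ _ Hx2 Hy2.
by exists (w1 ++ w2); split; apply: theta_cat.
Qed.

Lemma iter_cat_inv {p v1 v2 y} :
  theta_iter p (wsingle (v1 ++ v2)) y ->
  exists s t, y = s ++ t /\ theta_iter p (wsingle v1) s /\ theta_iter p (wsingle v2) t.
Proof.
elim: p y => [|p IH] y /=.
  by move=> ->; exists v1, v2.
move=> [u0 [Hu0 Hy]].
have [s0 [t0 [E [Hs0 Ht0]]]] := IH _ Hu0.
rewrite E in Hy.
have [s [t [-> [Hs Ht]]]] := theta_cat_inv Hy.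
by exists s, t; split => //; split; [exists s0|exists t0].
Qed.

Lemma shift {p v v' x} :
  theta_iter p (wsingle v) x -> theta_word v v' ->
  exists y, theta_word x y /\ theta_iter p (wsingle v') y.
Proof.
elim: p x => [|p IH] x /=.
  by move=> -> H; exists v'.
move=> [x0 [Hx0 Hx]] Hv.
have [y0 [Hy0 Hy0']] := IH _ Hx0 Hv.
have [y [Hy Hy']] := diamond Hx Hy0.
by exists y; split => //; exists y0.
Qed.

Lemma legal_theta {w w'} : legal w -> theta_word w w' -> legal w'.
Proof.
move=> [k [x [v [Hv /infixP [l [r E]]]]]] Hw.
have [l' Hl] := theta_ex l.
have [r' Hr] := theta_ex r.
exists k.+1, x, (l' ++ w' ++ r'); split.
  exists v; split => //; rewrite E; apply: theta_cat => //; exact: theta_cat.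
by apply/infixP; exists l', r'.
Qed.

Lemma legal_infix {w v} : infix w v -> legal v -> legal w.
Proof.
move=> Hi [k [x [v' [H Hi']]]]; exists k, x, v'; split => //.
exact: infix_trans Hi Hi'.
Qed.

Lemma core {p u e x} :
  theta_iter p (wsingle [:: La]) x -> theta_word e [:: La; Lb; La] ->
  legal (x ++ u ++ e) ->
  exists t z, theta_iter p (wsingle [:: La]) t /\ theta_word u z /\
    legal (t ++ z ++ [:: La; Lb; La]).
Proof.
move=> Hx He Hl.
have Hba : theta_word [:: La] ([:: Lb] ++ [:: La]).
  exists [:: Lb; La], [::]; split; [by right|by []].
have [y [Hy Hy']] := shift Hx Hba.
have [s [t [Ey [Hs Ht]]]] := iter_cat_inv Hy'.
have [z Hz] := theta_ex u.
exists t, z; split => //; split => //.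
have Hl' : legal (y ++ z ++ [:: La; Lb; La]).
  apply: legal_theta Hl _; apply: theta_cat => //; exact: theta_cat.
apply: legal_infix Hl'; rewrite Ey -catA; apply/infixP; by exists s, [::]; rewrite cats0.
Qed.

Theorem mainTheorem3 (p : nat) (u : word) :
  (contains_legal
     (wcat (theta_iter p (wsingle [:: La])) (wcat (wsingle u) (wsingle [:: La; Lb])))
   \/ contains_legal
     (wcat (theta_iter p (wsingle [:: La])) (wcat (wsingle u) (wsingle [:: Lb; La])))) ->
  contains_legal
    (wcat (theta_iter p (wsingle [:: La])) (wcat (theta_word u) (wsingle [:: La; Lb])))
  /\ contains_legal
    (wcat (theta_iter p (wsingle [:: La]))
       (wcat (theta_word u) (wcat (theta_word [:: Lb]) (wsingle [:: Lb; La])))).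
Proof.
have Hab : theta_word [:: La; Lb] [:: La; Lb; La].
  exists [:: La; Lb], [:: La]; split; first by left.
  split => //; by exists [:: La], [::].
have Hba : theta_word [:: Lb; La] [:: La; Lb; La].
  exists [:: La], [:: Lb; La]; split => //.
  split => //; exists [:: Lb; La], [::]; split; [by right|by []].
move=> H.
have [t [z [Ht [Hz Hl]]]] :
  exists t z, theta_iter p (wsingle [:: La]) t /\ theta_word u z /\
    legal (t ++ z ++ [:: La; Lb; La]).
  case: H => [[w [[x [y [Hx [[u0 [e [-> [-> ->]]]] ->]]]] Hl]]
            |[w [[x [y [Hx [[u0 [e [-> [-> ->]]]] ->]]]] Hl]]].
  - exact: core Hx Hab Hl.
  - exact: core Hx Hba Hl.
split.
- exists (t ++ z ++ [:: La; Lb]); split.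
    exists t, (z ++ [:: La; Lb]); split => //; split => //.
    by exists z, [:: La; Lb].
  apply: legal_infix Hl; apply/infixP; exists [::], [:: La].
  by rewrite /= -!catA.
- exists (t ++ z ++ [:: La] ++ [:: Lb; La]); split.
    exists t, (z ++ [:: La] ++ [:: Lb; La]); split => //; split => //.
    exists z, ([:: La] ++ [:: Lb; La]); split => //; split => //.
    exists [:: La], [:: Lb; La]; split => //.
    by exists [:: La], [::].
  by [].
Qed.
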